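(* Let $(\Delta,R)$ be a gentle quiver, $\rho=(\alpha,\beta)\in R$ an isolated relation, and $(\Delta',R')$ the quiver with relations obtained from $(\Delta,R)$ by completing $\rho$. Then: (1) $(\Delta',R')$ is a gentle quiver if and only if $\mathbb Z\cdot\rho\neq\{\rho\}$ (here $\mathbb Z\cdot\rho$ is the $\Phi$-orbit of $\rho$ in $\mathcal N$). (2) If $\mathbb Z\cdot\rho\ne\{\rho\}$, then $\mathcal N_{(\Delta',R')}=\mathcal N_{(\Delta,R)}\setminus\{\rho\}$ and \[ \mathcal N_{(\Delta',R')}/\mathbb Z = \{\mathcal O'\in\mathcal N_{(\Delta,R)}/\mathbb Z \mid \mathcal O'\ne\mathbb Z\cdot\rho\}\cup\{(\mathbb Z\cdot\rho)\setminus\{\rho\}\}; \] moreover $\mathcal C_{(\Delta',R')}=\mathcal C_{(\Delta,R)}\cup\{\alpha,\beta,\gamma_\rho\}$ and $\mathcal C_{(\Delta',R')}/\mathbb Z=\mathcal C_{(\Delta,R)}/\mathbb Z\cup\{\{\alpha,\beta,\gamma_\rho\}\}$.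
   Context: A quiver $\Delta$ has finite vertex set $\Delta_0$, arrow set $\Delta_1$, maps $s,t$. A path of length $n\ge1$ is $(\alpha_1,\dots,\alpha_n)$ with $s\alpha_i=t\alpha_{i+1}$. A gentle quiver is $(\Delta,R)$ with $\Delta$ connected, $R$ a set of paths of length 2, such that: (1) each vertex is start of at most two arrows and end of at most two arrows; (2) for each arrow $\alpha$ at most one $\beta$ with $s\beta=t\alpha$, $(\beta,\alpha)\notin R$ and at most one $\gamma$ with $t\gamma=s\alpha$, $(\alpha,\gamma)\notin R$; (3) for each $\alpha$ at most one $\beta$ with $(\beta,\alpha)\in R$ and at most one $\gamma$ with $(\alpha,\gamma)\in R$; (4) for some $n$ every path of length $n$ has a subpath in $R$. Fix $\sigma,\tau:\Delta_1\to\{\pm1\}$ with distinct arrows of same start having opposite $\sigma$, distinct arrows of same end opposite $\tau$, and for $s\alpha=t\beta$: $(\alpha,\beta)\in R$ iff $\sigma\alpha=\tau\beta$; $\sigma\omega=\sigma\alpha_n,\tau\omega=\tau\alpha_1$. Permitted paths: no consecutive pair in $R$, plus trivial $1_{x,\varepsilon}$ ($s=t=x$, $\sigma=\varepsilon,\tau=-\varepsilon$); maximal if no arrow $\alpha$ with $s\alpha=t\omega,\sigma\alpha=-\tau\omega$ and no $\beta$ with $t\beta=s\omega,\tau\beta=-\sigma\omega$; set $\mathcal M$. Antipaths: all consecutive pairs in $R$, plus trivial $1'_{x,\varepsilon}$ ($\sigma=\tau=\varepsilon$); maximal if no $\alpha$ with $s\alpha=t\omega,\sigma\alpha=\tau\omega$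 and no $\beta$ with $t\beta=s\omega,\tau\beta=\sigma\omega$; set $\mathcal N$. $\phi:\mathcal M\to\mathcal N$, $\omega\mapsto$ unique $\omega'$ with $t\omega'=t\omega,\tau\omega'=-\tau\omega$; $\psi:\mathcal N\to\mathcal M$, $\omega\mapsto$ unique $\omega'$ with $s\omega'=s\omega,\sigma\omega'=-\sigma\omega$; $\Phi=\phi\psi$ acting on $\mathcal N$, orbit set $\mathcal N/\mathbb Z$. $\mathcal C$: arrows $\alpha$ with $(\alpha)$ not a subpath of a maximal antipath; $\Psi:\mathcal C\to\mathcal C$, $\alpha\mapsto$ unique $\beta\in\mathcal C$ with $t\beta=s\alpha,\tau\beta=\sigma\alpha$; orbit set $\mathcal C/\mathbb Z$. Subscripts indicate the gentle quiver these sets are formed in. A relation $(\alpha,\beta)\in R$ is isolated if the path $(\alpha,\beta)$ belongs to $\mathcal N$. For a set $R_0$ of isolated relations, the quiver obtained by completing the relations from $R_0$ is $(\Delta',R')$ with $\Delta'_0=\Delta_0$, $\Delta'_1=\Delta_1\cup\{\gamma_\rho\mid\rho\in R_0\}$ with new arrows $\gamma_\rho$, where for $\rho=(\alpha,\beta)$ the arrow $\gamma_\rho$ goes from $t\alpha$ to $s\beta$, and $R'=R\cup\{(\gamma_\rho,\alpha),(\beta,\gamma_\rho)\mid \rho=(\alpha,\beta)\in R_0\}$. *)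

(* Defs.v *)
From mathcomp Require Export all_boot.
From mathcomp Require Export boolp classical_sets.
Set Implicit Arguments. Unset Strict Implicit. Unset Printing Implicit Defensive.
Local Open Scope classical_set_scope.

(* A set R of paths of length 2 is a relation R : rel A,
   R x y meaning (x,y) \in R (so s x = t y is required).
   A path (a_1,...,a_n) is the sequence [:: a_1; ...; a_n] with
   s a_i = t a_(i+1).  Signs +1/-1 are encoded by true/false, so "-e" is ~~ e. *)

Definition gpath_ (V A : Type) := ((V * bool) + (A * seq A))%type.
Notation gpath := gpath_.

Section Gentle.
Context {V A : finType} (s t : A -> V) (R : rel A).

Definition consec (p : seq A) := zip p (behead p).

Definition is_path (p : seq A) : bool :=
  (p != [::]) && all (fun xy => s xy.1 == t xy.2) (consec p).

Definition has_rel (p : seq A) : bool := has (fun xy => R xy.1 xy.2) (consec p).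

Definition qadj : rel V := fun x y =>
  [exists e : A, ((s e == x) && (t e == y)) || ((s e == y) && (t e == x))].

Definition qconnected : Prop := forall x y : V, connect qadj x y.

Definition gentle : Prop :=
  [/\ qconnected /\ (forall x y, R x y -> s x = t y),
      (forall x : V, #|[pred b | s b == x]| <= 2 /\ #|[pred b | t b == x]| <= 2),
      (forall a : A, #|[pred b | (s b == t a) && ~~ R b a]| <= 1 /\
                     #|[pred c | (t c == s a) && ~~ R a c]| <= 1),
      (forall a : A, #|[pred b | R b a]| <= 1 /\ #|[pred c | R a c]| <= 1)
    & exists n, 0 < n /\
        (forall p : seq A, size p = n -> is_path p -> has_rel p)].

Definition sign_ok (sg tau : A -> bool) : Prop :=
  [/\ (forall a b, a != b -> s a = s b -> sg a = ~~ sg b),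
      (forall a b, a != b -> t a = t b -> tau a = ~~ tau b)
    & (forall a b, s a = t b -> R a b = (sg a == tau b))].

(* Generalised paths: inl (x, e) is the trivial path at x with parameter e
   (1_{x,e} or 1'_{x,e}); inr (a, p) is the path (a :: p). *)
Notation gpath := (gpath_ V A).

Definition gt (g : gpath) : V :=
  match g with inl (x, _) => x | inr (a, _) => t a end.
Definition gs (g : gpath) : V :=
  match g with inl (x, _) => x | inr (a, p) => s (last a p) end.
Definition arrows (g : gpath) : seq A :=
  match g with inl _ => [::] | inr (a, p) => a :: p end.

Context (sg tau : A -> bool).

(* sigma, tau of permitted paths: 1_{x,e} has sigma = e, tau = -e *)
Definition psg (g : gpath) : bool :=
  match g with inl (_, e) => e | inr (a, p) => sg (last a p) end.
Definition ptau (g : gpath) : bool :=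
  match g with inl (_, e) => ~~ e | inr (a, _) => tau a end.
(* sigma, tau of antipaths: 1'_{x,e} has sigma = tau = e *)
Definition asg (g : gpath) : bool :=
  match g with inl (_, e) => e | inr (a, p) => sg (last a p) end.
Definition atau (g : gpath) : bool :=
  match g with inl (_, e) => e | inr (a, _) => tau a end.

Definition permitted (g : gpath) : bool :=
  match g with
  | inl _ => true
  | inr (a, p) => is_path (a :: p) && ~~ has_rel (a :: p)
  end.

Definition antipath (g : gpath) : bool :=
  match g with
  | inl _ => true
  | inr (a, p) => is_path (a :: p) && all (fun xy => R xy.1 xy.2) (consec (a :: p))
  end.

Definition maxperm (g : gpath) : bool :=
  [&& permitted g,
      ~~ [exists a : A, (s a == gt g) && (sg a == ~~ ptau g)] &
      ~~ [exists b : A, (t b == gs g) && (tau b == ~~ psg g)]].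

Definition maxanti (g : gpath) : bool :=
  [&& antipath g,
      ~~ [exists a : A, (s a == gt g) && (sg a == atau g)] &
      ~~ [exists b : A, (t b == gs g) && (tau b == asg g)]].

Definition Mset : set gpath := [set g | maxperm g].
Definition Nset : set gpath := [set g | maxanti g].

Definition phi_rel (w w' : gpath) : Prop :=
  [/\ maxperm w, maxanti w', gt w' = gt w & atau w' = ~~ ptau w].
Definition psi_rel (w w' : gpath) : Prop :=
  [/\ maxanti w, maxperm w', gs w' = gs w & psg w' = ~~ asg w].
Definition Phi_rel (w w'' : gpath) : Prop :=
  exists w', psi_rel w w' /\ phi_rel w' w''.

Definition Cset : set A :=
  [set a | ~ exists w, Nset w /\ a \in arrows w].
Definition Psi_rel (a b : A) : Prop :=
  [/\ Cset a, Cset b, t b = s a & tau b = sg a].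

End Gentle.

Fixpoint iter_rel {T : Type} (F : T -> T -> Prop) (n : nat) (x y : T) : Prop :=
  match n with
  | 0 => x = y
  | n'.+1 => exists z, F x z /\ iter_rel F n' z y
  end.

Definition zorbit {T : Type} (F : T -> T -> Prop) (x : T) : set T :=
  [set y | exists n, iter_rel F n x y \/ iter_rel F n y x].

Definition orbits {T : Type} (F : T -> T -> Prop) (X : set T) : set (set T) :=
  [set O | exists x, X x /\ O = zorbit F x].

(* Completion of the isolated relation (al, be): new arrow None = gamma_rho
   from t al to s be, new relations (gamma, al) and (be, gamma). *)
Section Completion.
Context {V A : finType} (s t : A -> V) (R : rel A) (sg tau : A -> bool) (al be : A).

Definition cs (o : option A) : V := match o with Some a => s a | None => t al end.
Definition ct (o : option A) : V := match o with Some a => t a | None => s be end.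
Definition cR : rel (option A) := fun x y =>
  match x, y with
  | Some a, Some b => R a b
  | None, Some a => a == al
  | Some b, None => b == be
  | None, None => false
  end.
(* extension of the sign functions to the new arrow, forced by
   (gamma,al) \in R' iff sg gamma = tau al, (be,gamma) \in R' iff sg be = tau gamma *)
Definition csg (o : option A) : bool := match o with Some a => sg a | None => tau al end.
Definition ctau (o : option A) : bool := match o with Some a => tau a | None => sg be end.

Definition isolated : bool := R al be && maxanti s t R sg tau (inr (al, [:: be])).

End Completion.

Definition emb {V A : finType} (g : gpath V A) : gpath V (option A) :=
  match g with inl xe => inl xe | inr (a, p) => inr (Some a, map Some p) end.

(* Main.v *)
Require Import Defs.
From mathcomp Require Import zify.
Set Implicit Arguments. Unset Strict Implicit. Unset Printing Implicit Defensive.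
Local Open Scope classical_set_scope.


Section Chains.
Variables (A : finType) (H : eqType) (K T : A -> H).
Hypotheses (Kinj : injective K) (Tinj : injective T).
Definition crel : rel A := fun x y => K x == T y.

Lemma chain_pred a p w : path crel a p -> w \in a :: p ->
  w = a \/ exists2 u, u \in a :: p & K u = T w.
Proof.
elim: p a => [|b p IH] a /=; first by rewrite inE => _ /eqP; left.
move=> /andP[/eqP Hab Hp]; rewrite inE => /orP[/eqP->|Hw]; first by left.
right; case: (IH b Hp Hw) => [->|[u Hu Hu']]; first by exists a; rewrite ?inE ?eqxx.
by exists u => //; rewrite inE Hu orbT.
Qed.

Lemma chain_succ a p w : path crel a p -> w \in a :: p ->
  w = last a p \/ exists2 u, u \in a :: p & K w = T u.
Proof.
elim: p a => [|b p IH] a /=; first by rewrite inE => _ /eqP; left.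
move=> /andP[/eqP Hab Hp]; rewrite inE => /orP[/eqP->|Hw].
  by right; exists b; rewrite ?inE ?eqxx ?orbT.
case: (IH b Hp Hw) => [->|[u Hu Hu']]; first by left.
by right; exists u => //; rewrite inE Hu orbT.
Qed.

Lemma chain_uniq a p : path crel a p -> (forall c, K c != T a) -> uniq (a :: p).
Proof.
move=> /(pathP a) Hp Ha.
have Hn : forall i, i < size p -> K (nth a (a :: p) i) = T (nth a (a::p) i.+1).
  by move=> i /Hp /eqP.
have key : forall i j, i < j -> j < size (a :: p) -> nth a (a::p) i != nth a (a::p) j.
  elim=> [|i IH] [|j] // Hij Hj.
    apply/eqP => E; have := Ha (nth a (a :: p) j); rewrite Hn; last by [].
    by rewrite -E /= eqxx.
  apply/eqP => E.
  have E2 : K (nth a (a :: p) i) = K (nth a (a::p) j).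
    have Hj' : j < size p by [].
    have Hi' : i < size p by apply: ltn_trans Hj'.
    by rewrite Hn // E -Hn.
  have E3 := Kinj E2.
  move: (IH j Hij (ltnW Hj)); by rewrite E3 eqxx.
apply/(uniqP a) => i j Hi Hj E.
case: (ltngtP i j) => // Hij; [move: (key i j Hij Hj) | move: (key j i Hij Hi)];
  by rewrite E eqxx.
Qed.

Lemma chain_hd_uniq a p b q : path crel a p -> path crel b q -> T a = T b ->
  (forall c, T c != K (last a p)) -> (forall c, T c != K (last b q)) -> a :: p = b :: q.
Proof.
move=> Hp Hq Eab; have ab := Tinj Eab; subst b.
elim: p q a Hp Hq {Eab} => [|c p IH] [|d q] a //=.
- by move=> _ /andP[/eqP E _] /(_ d); rewrite E eqxx.
- by move=> /andP[/eqP E _] _ _ /(_ c); rewrite E eqxx.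
move=> /andP[/eqP E1 Hp] /andP[/eqP E2 Hq] H1 H2.
have cd : c = d by apply: Tinj; rewrite -E1 -E2.
subst d; by case: (IH q c Hp Hq H1 H2) => ->.
Qed.

Definition walknxt (a : A) := [pick b | T b == K a].
Fixpoint walk n a := if n is n'.+1 then
  (if walknxt a is Some b then b :: walk n' b else [::]) else [::].

Lemma walk_path n a : path crel a (walk n a).
Proof.
elim: n a => //= n IH a; rewrite /walknxt; case: pickP => //= b /eqP E.
by rewrite /crel E eqxx IH.
Qed.

Lemma walk_end n a : size (walk n a) = n \/ (forall c, T c != K (last a (walk n a))).
Proof.
elim: n a => [|n IH] a /=.
  by left.
rewrite /walknxt; case: pickP => [b _|H0] /=.
  by case: (IH b) => [->|?]; [left|right].
by right=> c; apply/negP => Hc; have := H0 c; rewrite Hc.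
Qed.

Lemma chain_ex_hd a : (forall c, K c != T a) ->
  exists p, path crel a p /\ forall c, T c != K (last a p).
Proof.
move=> Ha; exists (walk #|A| a); split; first exact: walk_path.
case: (walk_end #|A| a) => // Hs.
have U := @chain_uniq a (walk #|A| a) (walk_path _ _) Ha.
have := max_card (mem (a :: walk #|A| a)).
by move/card_uniqP: U => ->; rewrite /= Hs ltnn.
Qed.
End Chains.

Lemma crel_swap (A : finType) (H : eqType) (K T : A -> H) :
  (fun z => (crel T K)^~ z) =2 crel K T.
Proof. by move=> x y; rewrite /crel eq_sym. Qed.

Lemma last_rev_belast (A : Type) (a : A) p : last (last a p) (rev (belast a p)) = a.
Proof.
elim: p a => //= b p IH a; rewrite rev_cons last_rcons //.
Qed.

Section Chains2.
Variables (A : finType) (H : eqType) (K T : A -> H).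
Hypotheses (Kinj : injective K) (Tinj : injective T).

Lemma rev_chain a p : path (crel T K) a p ->
  path (crel K T) (last a p) (rev (belast a p)).
Proof.
move=> Hp; have := rev_path (crel K T) a p.
by rewrite (eq_path (crel_swap T K)) => ->.
Qed.

Lemma rev_chain' a p : path (crel K T) a p ->
  path (crel T K) (last a p) (rev (belast a p)).
Proof.
move=> Hp; have := rev_path (crel T K) a p.
by rewrite (eq_path (crel_swap K T)) => ->.
Qed.

Lemma chain_ex_tl z : (forall c, T c != K z) ->
  exists a p, [/\ path (crel K T) a p, last a p = z & forall c, K c != T a].
Proof.
move=> Hz; case: (chain_ex_hd Tinj Hz) => p [Hp Hl].
exists (last z p), (rev (belast z p)); split.
- exact: rev_chain.
- exact: last_rev_belast.
- by [].
Qed.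

Lemma chain_tl_uniq a p b q : path (crel K T) a p -> path (crel K T) b q ->
  K (last a p) = K (last b q) ->
  (forall c, K c != T a) -> (forall c, K c != T b) -> a :: p = b :: q.
Proof.
move=> Hp Hq E Ha Hb.
have Hp' := rev_chain' Hp; have Hq' := rev_chain' Hq.
have := @chain_hd_uniq A H T K Kinj _ _ _ _ Hp' Hq' E.
rewrite !last_rev_belast => /(_ Ha Hb) E2.
have := congr1 rev E2; by rewrite !rev_cons !revK -!lastI.
Qed.
End Chains2.


Section GP.
Variables (V A : finType) (K Tn : A -> (V * bool)%type) (tr : (V * bool)%type -> (V * bool)%type).

Definition hdn (g : gpath V A) := match g with inl xe => tr xe | inr (a, _) => Tn a end.
Definition tln (g : gpath V A) := match g with inl xe => tr xe | inr (a, p) => K (last a p) end.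
Definition chok (g : gpath V A) := match g with inl _ => true | inr (a, p) => path (crel K Tn) a p end.
Definition maxc (g : gpath V A) : Prop :=
  [/\ chok g, forall c, K c != hdn g & forall c, Tn c != tln g].

Definition gcat (g1 g2 : gpath V A) : gpath V A :=
  match arrows g1 ++ arrows g2 with [::] => g1 | a :: p => inr (a, p) end.

Lemma gcat_prop g1 g2 : chok g1 -> chok g2 -> tln g1 = hdn g2 ->
  [/\ chok (gcat g1 g2), hdn (gcat g1 g2) = hdn g1, tln (gcat g1 g2) = tln g2
    & arrows (gcat g1 g2) = arrows g1 ++ arrows g2].
Proof.
case: g1 => [x1|[a p]]; case: g2 => [x2|[b q]] //= H1 H2 E.
all: try by rewrite /gcat /= ?cats0 ?H1 ?E; split.
all: try by rewrite /gcat /= -?E; split.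
by rewrite cat_path H1 /= last_cat /= /crel E eqxx H2; split.
Qed.

Hypotheses (Kinj : injective K) (Tinj : injective Tn) (trinj : injective tr).

Lemma maxc_hd_uniq g1 g2 : maxc g1 -> maxc g2 -> hdn g1 = hdn g2 -> g1 = g2.
Proof.
case: g1 => [x1|[a p]]; case: g2 => [x2|[b q]] /=.
- by move=> _ _ /trinj ->.
- by move=> [_ _ /(_ b) /eqP H] _ E; case: (H (esym E)).
- by move=> _ [_ _ /(_ a) /eqP H] E; case: (H E).
move=> [H1 _ H1'] [H2 _ H2'] E.
by case: (chain_hd_uniq Tinj H1 H2 E H1' H2') => -> ->.
Qed.

Lemma maxc_tl_uniq g1 g2 : maxc g1 -> maxc g2 -> tln g1 = tln g2 -> g1 = g2.
Proof.
case: g1 => [x1|[a p]]; case: g2 => [x2|[b q]] /=.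
- by move=> _ _ /trinj ->.
- by move=> [_ /(_ (last b q)) /eqP H _] _ E; case: (H (esym E)).
- by move=> _ [_ /(_ (last a p)) /eqP H _] E; case: (H E).
move=> [H1 H1' _] [H2 H2' _] E.
by case: (chain_tl_uniq Kinj H1 H2 E H1' H2') => -> ->.
Qed.

Variable tri : (V * bool)%type -> (V * bool)%type.
Hypothesis trK : cancel tri tr.

Lemma maxc_hd_ex h : (forall c, K c != h) -> exists g, maxc g /\ hdn g = h.
Proof.
move=> Hh; case: (pickP (fun a => Tn a == h)) => [a /eqP Ea|H0].
  have Ha : forall c, K c != Tn a by rewrite Ea.
  case: (chain_ex_hd Kinj Ha) => p [Hp Hl].
  by exists (inr (a, p)); split => //; split.
exists (inl (tri h)); rewrite /maxc /= trK; split => //; split => // c.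
by apply/negP => /eqP E; have := H0 c; rewrite E eqxx.
Qed.

Lemma maxc_tl_ex h : (forall c, Tn c != h) -> exists g, maxc g /\ tln g = h.
Proof.
move=> Hh; case: (pickP (fun a => K a == h)) => [z /eqP Ez|H0].
  have Hz : forall c, Tn c != K z by rewrite Ez.
  case: (chain_ex_tl Tinj Hz) => a [p [Hp Hl Ha]].
  exists (inr (a, p)); rewrite /maxc /= Hl Ez; split => //; split => //.
exists (inl (tri h)); rewrite /maxc /= trK; split => //; split => // c.
by apply/negP => /eqP E; have := H0 c; rewrite E eqxx.
Qed.

End GP.


Definition flipn {V : Type} (h : (V * bool)%type) := (h.1, ~~ h.2).
Lemma flipnK (V : Type) : involutive (@flipn V).
Proof. by case=> x e; rewrite /flipn /= negbK. Qed.
Lemma flipn_inj (V : Type) : injective (@flipn V).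
Proof. exact: inv_inj (@flipnK V). Qed.

Definition Sn {V A : Type} (s : A -> V) (sg : A -> bool) a := (s a, sg a).
Definition Kp {V A : Type} (s : A -> V) (sg : A -> bool) a := flipn (Sn s sg a).

Lemma all_consec (A : finType) (f : pred (A * A)) a p :
  all f (consec (a :: p)) = path (fun x y => f (x, y)) a p.
Proof. by elim: p a => //= b p IH a; rewrite -IH. Qed.

Lemma has_consec (A : finType) (f : pred (A * A)) a p :
  has f (consec (a :: p)) = ~~ path (fun x y => ~~ f (x, y)) a p.
Proof. by elim: p a => //= b p IH a; rewrite IH negb_and negbK. Qed.

Lemma pair_eqE (V : eqType) (u u' : V) (v v' : bool) :
  ((u == u') && (v == v')) = ((u, v) == (u', v')).
Proof. by rewrite xpair_eqE. Qed.

Section Br.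
Variables (V A : finType) (s t : A -> V) (R : rel A) (sg tau : A -> bool).
Hypothesis Hso : sign_ok s t R sg tau.
Hypothesis Hcomp : forall x y, R x y -> s x = t y.

Local Notation S := (Sn s sg).
Local Notation T := (Sn t tau).
Local Notation KP := (Kp s sg).

Lemma S_inj : injective S.
Proof.
case: Hso => H1 _ _ a b [E1 E2]; apply/eqP; apply/negP => /negP Hab.
by move: (H1 a b Hab E1); rewrite E2; case: (sg b).
Qed.
Lemma T_inj : injective T.
Proof.
case: Hso => _ H1 _ a b [E1 E2]; apply/eqP; apply/negP => /negP Hab.
by move: (H1 a b Hab E1); rewrite E2; case: (tau b).
Qed.
Lemma KP_inj : injective KP.
Proof. by move=> a b /flipn_inj /S_inj. Qed.

Lemma R_ST x y : R x y = (S x == T y).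
Proof.
case: Hso => _ _ H3; rewrite /Sn -pair_eqE.
case E: (s x == t y) => /=.
  by rewrite (H3 _ _ (eqP E)).
by apply/negP => /Hcomp /eqP; rewrite E.
Qed.

Lemma relfree x y : ((s x == t y) && ~~ R x y) = (KP x == T y).
Proof.
rewrite R_ST /Kp /flipn /Sn -!pair_eqE /=.
by case: (s x == t y) => //=; case: (sg x); case: (tau y).
Qed.

Lemma path_andb (B : Type) (e1 e2 : rel B) a p :
  path e1 a p && path e2 a p = path (fun x y => e1 x y && e2 x y) a p.
Proof.
elim: p a => //= b p IH a; rewrite -IH.
by case: (e1 a b); case: (e2 a b); case: (path e1 b p); case: (path e2 b p).
Qed.

Lemma antipath_chok g : antipath s t R g = chok S T g.
Proof.
case: g => [//|[a p]] /=; rewrite /is_path /= !all_consec path_andb.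
apply: eq_path => x y /=; rewrite /crel -R_ST.
by case Rxy: (R x y); rewrite ?andbF // (Hcomp Rxy) eqxx.
Qed.

Lemma permitted_chok g : permitted s t R g = chok KP T g.
Proof.
case: g => [//|[a p]] /=; rewrite /is_path /has_rel /= all_consec has_consec negbK.
by rewrite path_andb; apply: eq_path => x y /=; rewrite /crel -relfree.
Qed.

Lemma ex_S (g : V * bool) : [exists a, (s a == g.1) && (sg a == g.2)] = [exists a, S a == g].
Proof. by apply: eq_existsb => a; case: g => u v; rewrite pair_eqE. Qed.

Lemma hdA g : (gt t g, atau tau g) = hdn T id g.
Proof. by case: g => [[x e]|[a p]]. Qed.
Lemma tlA g : (gs s g, asg sg g) = tln S id g.
Proof. by case: g => [[x e]|[a p]]. Qed.
Lemma hdP g : (gt t g, ~~ ptau tau g) = flipn (hdn T flipn g).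
Proof. by case: g => [[x e]|[a p]]. Qed.
Lemma tlP g : (gs s g, ~~ psg sg g) = tln KP flipn g.
Proof. by case: g => [[x e]|[a p]]. Qed.

Lemma maxc3 (K' T' : A -> (V * bool)%type) c (u v : V * bool) :
  [&& c, ~~ [exists a, K' a == u] & ~~ [exists b, T' b == v]] <->
  [/\ c : Prop, forall a, K' a != u & forall b, T' b != v].
Proof.
rewrite !negb_exists; split.
  by case/and3P => -> /forallP H1 /forallP H2.
by case=> -> H1 H2; apply/and3P; split => //; apply/forallP.
Qed.

Lemma maxanti_iff g : maxanti s t R sg tau g <-> maxc S T id g.
Proof.
rewrite /maxanti antipath_chok.
have E1 : [exists a, (s a == gt t g) && (sg a == atau tau g)] = [exists a, S a == hdn T id g].
  by apply: eq_existsb => a; rewrite -hdA pair_eqE.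
have E2 : [exists b, (t b == gs s g) && (tau b == asg sg g)] = [exists b, T b == tln S id g].
  by apply: eq_existsb => a; rewrite -tlA pair_eqE.
by rewrite E1 E2 maxc3.
Qed.

Lemma maxperm_iff g : maxperm s t R sg tau g <-> maxc KP T flipn g.
Proof.
rewrite /maxperm permitted_chok.
have E1 : [exists a, (s a == gt t g) && (sg a == ~~ ptau tau g)] = [exists a, KP a == hdn T flipn g].
  apply: eq_existsb => a; rewrite pair_eqE hdP /Kp /Sn.
  by apply/eqP/eqP => [->|<-]; rewrite flipnK.
have E2 : [exists b, (t b == gs s g) && (tau b == ~~ psg sg g)] = [exists b, T b == tln KP flipn g].
  by apply: eq_existsb => a; rewrite -tlP pair_eqE.
by rewrite E1 E2 maxc3.
Qed.

Lemma phi_iff w w' : phi_rel s t R sg tau w w' <->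
  [/\ maxc KP T flipn w, maxc S T id w' & hdn T id w' = flipn (hdn T flipn w)].
Proof.
have E : hdn T flipn w = (gt t w, ptau tau w) by case: w => [[x e]|[a p]].
rewrite /phi_rel E -hdA /flipn /=.
split; first by case=> /maxperm_iff ? /maxanti_iff ? -> ->.
by case=> /maxperm_iff ? /maxanti_iff ? [-> ->].
Qed.

Lemma psi_iff w w' : psi_rel s t R sg tau w w' <->
  [/\ maxc S T id w, maxc KP T flipn w' & tln KP flipn w' = tln S id w].
Proof.
rewrite /psi_rel -tlA -tlP.
split; first by case=> /maxanti_iff ? /maxperm_iff ? -> ->; rewrite negbK; split.
by case=> /maxanti_iff ? /maxperm_iff ? [-> E]; split => //; rewrite -E negbK.
Qed.

Lemma id_inj (X : Type) : injective (@id X). Proof. by []. Qed.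

Lemma NN_hd_uniq w1 w2 : maxc S T id w1 -> maxc S T id w2 -> hdn T id w1 = hdn T id w2 -> w1 = w2.
Proof. by move=> H1 H2 E; apply: (maxc_hd_uniq T_inj _ H1 H2 E). Qed.
Lemma NN_tl_uniq w1 w2 : maxc S T id w1 -> maxc S T id w2 -> tln S id w1 = tln S id w2 -> w1 = w2.
Proof. by move=> H1 H2 E; apply: (maxc_tl_uniq S_inj _ H1 H2 E). Qed.
Lemma MM_hd_uniq w1 w2 : maxc KP T flipn w1 -> maxc KP T flipn w2 -> hdn T flipn w1 = hdn T flipn w2 -> w1 = w2.
Proof. move=> H1 H2 E; apply: (maxc_hd_uniq T_inj _ H1 H2 E); exact: flipn_inj. Qed.
Lemma MM_tl_uniq w1 w2 : maxc KP T flipn w1 -> maxc KP T flipn w2 -> tln KP flipn w1 = tln KP flipn w2 -> w1 = w2.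
Proof. move=> H1 H2 E; apply: (maxc_tl_uniq KP_inj _ H1 H2 E); exact: flipn_inj. Qed.

Lemma Phi_func w z1 z2 : Phi_rel s t R sg tau w z1 -> Phi_rel s t R sg tau w z2 -> z1 = z2.
Proof.
move=> [o1 [/psi_iff [Hw Ho1 E1] /phi_iff [_ Hz1 F1]]] [o2 [/psi_iff [_ Ho2 E2] /phi_iff [_ Hz2 F2]]].
have Eo : o1 = o2 by apply: MM_tl_uniq; rewrite ?E1 ?E2.
subst o2; apply: NN_hd_uniq => //; by rewrite F1 F2.
Qed.

Lemma Phi_inj w1 w2 z : Phi_rel s t R sg tau w1 z -> Phi_rel s t R sg tau w2 z -> w1 = w2.
Proof.
move=> [o1 [/psi_iff [Hw1 Ho1 E1] /phi_iff [_ Hz F1]]] [o2 [/psi_iff [Hw2 Ho2 E2] /phi_iff [_ _ F2]]].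
have Eo : o1 = o2.
  by apply: MM_hd_uniq => //; apply: flipn_inj; rewrite -F1 -F2.
subst o2; apply: NN_tl_uniq => //; by rewrite -E1 -E2.
Qed.

Lemma Phi_dom w z : Phi_rel s t R sg tau w z -> maxc S T id w /\ maxc S T id z.
Proof. by move=> [o [/psi_iff [? _ _] /phi_iff [_ ? _]]]. Qed.

Lemma Phi_total w : maxc S T id w -> exists z, Phi_rel s t R sg tau w z.
Proof.
move=> Hw; have [_ _ Htl] := Hw.
have [o [Ho Eo]] := maxc_tl_ex KP T_inj (@flipnK V) Htl.
have [_ Hhd _] := Ho.
have Hh : forall c, S c != flipn (hdn T flipn o).
  move=> c; apply/negP => /eqP E; move: (Hhd c); rewrite /Kp E flipnK eqxx //.
have [z [Hz Ez]] := @maxc_hd_ex _ _ S T id S_inj id (fun x => erefl) _ Hh.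
by exists z, o; split; [apply/psi_iff | apply/phi_iff].
Qed.
End Br.


Section Orb.
Variables (T : Type) (F : T -> T -> Prop).

Lemma iter_add n m x z : iter_rel F (n + m) x z <-> exists y, iter_rel F n x y /\ iter_rel F m y z.
Proof.
elim: n x => [|n IH] x /=; first by split; [exists x | case=> y [->]].
split; first by case=> y [Fxy /IH [w [H1 H2]]]; exists w; split => //; exists y.
by case=> w [[y [Fxy H1]] H2]; exists y; split => //; apply/IH; exists w.
Qed.

Lemma iter1 x y : F x y -> iter_rel F 1 x y.
Proof. by move=> H; exists y. Qed.

Hypothesis Ffun : forall x y1 y2, F x y1 -> F x y2 -> y1 = y2.
Hypothesis Finj : forall x1 x2 y, F x1 y -> F x2 y -> x1 = x2.

Lemma iter_func n x y1 y2 : iter_rel F n x y1 -> iter_rel F n x y2 -> y1 = y2.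
Proof.
elim: n x => [|n IH] x /=; first by move=> <- <-.
by move=> [z1 [F1 H1]] [z2 [F2 H2]]; have E := Ffun F1 F2; subst z2; exact: IH H1 H2.
Qed.

Lemma iter_inj n x1 x2 y : iter_rel F n x1 y -> iter_rel F n x2 y -> x1 = x2.
Proof.
elim: n x1 x2 => [|n IH] x1 x2 /=; first by move=> -> ->.
move=> [z1 [F1 H1]] [z2 [F2 H2]]; have E := IH _ _ H1 H2; subst z2; exact: Finj F1 F2.
Qed.

Lemma zorbit_trans x y z : zorbit F x y -> zorbit F y z -> zorbit F x z.
Proof.
move=> [n [H1|H1]] [m [H2|H2]].
- by exists (n + m); left; apply/iter_add; exists y.
- case: (leqP n m) => Hnm.
    have := H2; rewrite -(subnK Hnm) => /iter_add [w [Hw1 Hw2]].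
    by have E := iter_inj Hw2 H1; subst w; exists (m - n); right.
  have := H1; rewrite -(subnK (ltnW Hnm)) => /iter_add [w [Hw1 Hw2]].
  by have E := iter_inj Hw2 H2; subst w; exists (n - m); left.
- case: (leqP n m) => Hnm.
    have := H2; rewrite -(subnK Hnm) addnC => /iter_add [w [Hw1 Hw2]].
    by have E := iter_func Hw1 H1; subst w; exists (m - n); left.
  have := H1; rewrite -(subnK (ltnW Hnm)) addnC => /iter_add [w [Hw1 Hw2]].
  by have E := iter_func Hw1 H2; subst w; exists (n - m); right.
- by exists (m + n); right; apply/iter_add; exists y.
Qed.

Lemma zorbit_sym x y : zorbit F x y -> zorbit F y x.
Proof. by move=> [n [H|H]]; exists n; [right|left]. Qed.

Lemma zorbit_refl x : zorbit F x x.
Proof. by exists 0; left. Qed.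

Lemma zorbit_eq x y : zorbit F x y -> zorbit F y = zorbit F x.
Proof.
move=> Hxy; apply/seteqP; split => z Hz.
  exact: zorbit_trans Hxy Hz.
exact: zorbit_trans (zorbit_sym Hxy) Hz.
Qed.
End Orb.

Section Skip.
Variables (T T' : Type) (e : T -> T') (F : T -> T -> Prop) (F' : T' -> T' -> Prop)
  (X : set T) (r r2 : T).
Hypothesis einj : injective e.
Hypothesis Ffun : forall x y1 y2, F x y1 -> F x y2 -> y1 = y2.
Hypothesis Fdom : forall x y, F x y -> X x /\ X y.
Hypothesis Frr2 : F r r2.
Hypothesis r2r : r2 <> r.
Definition Gsk u v := (F u v /\ v <> r) \/ (F u r /\ v = r2).
Hypothesis HF1 : forall u, X u -> u <> r -> forall y, F' (e u) y <-> exists v, y = e v /\ Gsk u v.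
Hypothesis HF2 : forall y y', F' y y' -> exists u, [/\ X u, u <> r & y = e u].

Lemma Gsk_prop u v : Gsk u v -> [/\ X v, v <> r & exists k, iter_rel F k u v].
Proof.
case=> [[Fuv vr]|[Fur ->]].
  by split => //; [exact: (Fdom Fuv).2 | exists 1; exact: iter1].
split => //; first exact: (Fdom Frr2).2.
by exists 2; exists r; split => //; exact: iter1.
Qed.

Lemma skipA n u y : X u -> u <> r -> y <> r -> iter_rel F n u y ->
  exists m, iter_rel F' m (e u) (e y).
Proof.
elim: n {-2}n (leqnn n) u => [|N IH] n Hn u Xu ur yr.
  by move: Hn; rewrite leqn0 => /eqP -> /= ->; exists 0.
case: n Hn => [|n] Hn /=; first by move=> ->; exists 0.
move=> [u1 [Fu1 H1]].
have [u1r|u1r] := (boolp.pselect (u1 = r)).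
  subst u1; case: n Hn H1 => [|n] Hn /=; first by move=> E; case: yr.
  move=> [u2 [Fu2 H2]]; have E := Ffun Fu2 Frr2; subst u2.
  have Xr2 := (Fdom Frr2).2.
  have [m Hm] := IH n (leq_trans (leqnSn _) Hn) r2 Xr2 r2r yr H2.
  exists m.+1; exists (e r2); split => //; apply/(HF1 Xu ur); exists r2; split => //; by right.
have Xu1 := (Fdom Fu1).2.
have [m Hm] := IH n Hn u1 Xu1 u1r yr H1.
exists m.+1; exists (e u1); split => //; apply/(HF1 Xu ur); exists u1; split => //; by left.
Qed.

Lemma skipB m u z : X u -> u <> r -> iter_rel F' m (e u) z ->
  exists v, [/\ z = e v, X v, v <> r & exists k, iter_rel F k u v].
Proof.
elim: m u => [|m IH] u Xu ur /=; first by move=> <-; exists u; split => //; exists 0.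
move=> [y [/(HF1 Xu ur) [v [-> Guv]] Hm]].
have [Xv vr [k Hk]] := Gsk_prop Guv.
have [w [-> Xw wr [k' Hk']]] := IH v Xv vr Hm.
exists w; split => //; exists (k + k'); apply/iter_add; exists v; split => //.
Qed.

Lemma skip_orbit x : X x -> x <> r -> zorbit F' (e x) = e @` (zorbit F x `\ r).
Proof.
move=> Xx xr; apply/seteqP; split => z.
  move=> [m [H|H]].
    have [v [-> Xv vr [k Hk]]] := skipB Xx xr H.
    by exists v => //; split => //; exists k; left.
  case: m H => [|m] /=.
    move=> ->; exists x => //; split => //; exact: zorbit_refl.
  move=> [y [Fzy H]]; have [u [Xu ur Ez]] := HF2 Fzy; subst z.
  have [v [Ev Xv vr [k Hk]]] := skipB Xu ur (ex_intro _ y (conj Fzy H) : iter_rel F' m.+1 (e u) (e x)).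
  have E := einj Ev; subst v.
  by exists u => //; split => //; exists k; right.
move=> [v [[n [H|H]] vr] <-].
  by have [m Hm] := skipA Xx xr vr H; exists m; left.
have Xv : X v.
  by case: n H => [|n] /=; [move=> -> | move=> [y [Fvy _]]; exact: (Fdom Fvy).1].
by have [m Hm] := skipA Xv vr xr H; exists m; right.
Qed.
End Skip.

Section Lift.
Variables (T T' : Type) (e : T -> T') (F : T -> T -> Prop) (F' : T' -> T' -> Prop)
  (X : set T).
Hypothesis einj : injective e.
Hypothesis Fdom : forall x y, F x y -> X x /\ X y.
Hypothesis HF1 : forall u, X u -> forall y, F' (e u) y <-> exists v, y = e v /\ F u v.
Hypothesis HF2 : forall u y, X u -> F' y (e u) -> exists v, y = e v /\ F v u.

Lemma liftA n u v : iter_rel F n u v -> X u -> iter_rel F' n (e u) (e v).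
Proof.
elim: n u => [|n IH] u /=; first by move=> ->.
move=> [w [Fuw H]] Xu; exists (e w); split; last exact: IH H (Fdom Fuw).2.
by apply/(HF1 Xu); exists w.
Qed.

Lemma liftB n u z : X u -> iter_rel F' n (e u) z -> exists v, z = e v /\ iter_rel F n u v.
Proof.
elim: n u => [|n IH] u Xu /=; first by move=> <-; exists u.
move=> [y [/(HF1 Xu) [v [-> Fuv]] H]].
have [w [-> Hw]] := IH v (Fdom Fuv).2 H.
by exists w; split => //; exists v.
Qed.

Lemma liftC n u z : X u -> iter_rel F' n z (e u) -> exists v, z = e v /\ iter_rel F n v u.
Proof.
elim: n u z => [|n IH] u z Xu /=; first by move=> ->; exists u.
move=> [y [Fzy H]].
have [v [Ev Hv]] := IH u y Xu H.
subst y.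
have Xv : X v by case: n H Hv {IH} => [|n] /= H; [move=> -> | move=> [w [Fvw _]]; exact: (Fdom Fvw).1].
have [w [-> Fwv]] := HF2 Xv Fzy.
by exists w; split => //; exists v.
Qed.

Lemma lift_orbit x : X x -> zorbit F' (e x) = e @` zorbit F x.
Proof.
move=> Xx; apply/seteqP; split => z.
  move=> [m [H|H]].
    by have [v [-> Hv]] := liftB Xx H; exists v => //; exists m; left.
  by have [v [-> Hv]] := liftC Xx H; exists v => //; exists m; right.
move=> [v [n [H|H]] <-].
  by exists n; left; exact: liftA.
have Xv : X v by case: n H => [|n] /= H; [rewrite H | case: H => w [Fvw _]; exact: (Fdom Fvw).1].
by exists n; right; exact: liftA.
Qed.
End Lift.


Section GO.
Variables (V A : finType) (s t : A -> V) (R : rel A) (sg tau : A -> bool).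
Hypothesis Hso : sign_ok s t R sg tau.
Hypothesis Hcomp : forall x y, R x y -> s x = t y.

Lemma card_le1_by (P : {pred A}) (f : A -> (V * bool)%type) :
  (forall x y, x \in P -> y \in P -> f x = f y) -> injective f -> #|P| <= 1.
Proof.
move=> H Hf; apply/card_le1_eqP => x y Hx Hy; exact: Hf (H _ _ Hy Hx).
Qed.

Lemma gentle_of : qconnected s t -> 
  (exists n, 0 < n /\ (forall p : seq A, size p = n -> is_path s t p -> has_rel R p)) ->
  gentle s t R.
Proof.
move=> Hc Hacy; have [H1 H2 H3] := Hso.
have Sinj := S_inj Hso; have Tinj := T_inj Hso.
have RST := R_ST Hso Hcomp.
split => //.
- move=> x; split.
    apply: leq_trans (leq_card_in sg _ _) _; last by rewrite card_bool.
    move=> a b; rewrite !inE => /eqP Ha /eqP Hb E; apply/eqP/negP => /negP Hab.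
    by move: (H1 a b Hab (etrans Ha (esym Hb))); rewrite E; case: (sg b).
  apply: leq_trans (leq_card_in tau _ _) _; last by rewrite card_bool.
  move=> a b; rewrite !inE => /eqP Ha /eqP Hb E; apply/eqP/negP => /negP Hab.
  by move: (H2 a b Hab (etrans Ha (esym Hb))); rewrite E; case: (tau b).
- move=> a; split.
    apply: (card_le1_by (f := Sn s sg)) => // x y; rewrite !inE.
    move=> /andP[/eqP Ex Rx] /andP[/eqP Ey Ry].
    rewrite (H3 _ _ Ex) in Rx; rewrite (H3 _ _ Ey) in Ry.
    rewrite /Sn Ex Ey; congr pair.
    by move: Rx Ry; case: (sg x); case: (sg y); case: (tau a).
  apply: (card_le1_by (f := Sn t tau)) => // x y; rewrite !inE.
  move=> /andP[/eqP Ex Rx] /andP[/eqP Ey Ry].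
  rewrite (H3 _ _ (esym Ex)) in Rx; rewrite (H3 _ _ (esym Ey)) in Ry.
  rewrite /Sn Ex Ey; congr pair.
  by move: Rx Ry; case: (tau x); case: (tau y); case: (sg a).
- move=> a; split.
    apply: (card_le1_by (f := Sn s sg)) => // x y; rewrite !inE !RST.
    by move=> /eqP -> /eqP ->.
  apply: (card_le1_by (f := Sn t tau)) => // x y; rewrite !inE !RST.
  by move=> /eqP <- /eqP <-.
Qed.
End GO.


Lemma noNone_map (X : eqType) (l : seq (option X)) : None \notin l -> l = map Some (pmap id l).
Proof. by elim: l => //= [[b|]] p IH; rewrite in_cons //= => Hp; rewrite -IH. Qed.

Section Emb.
Variables (V A : finType).
Implicit Types (g : gpath V A).

Lemma arrows_emb g : arrows (emb g) = map Some (arrows g).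
Proof. by case: g => [[x e]|[a p]]. Qed.

Lemma emb_inj : injective (@emb V A).
Proof.
case=> [[x e]|[a p]] [[y f]|[b q]] //=; first by case=> -> ->.
by case=> -> /(inj_map (@Some_inj _)) ->.
Qed.

Variables (K T : A -> (V * bool)%type) (K' T' : option A -> (V * bool)%type)
  (tr : (V * bool)%type -> (V * bool)%type).
Hypothesis HK : forall a, K' (Some a) = K a.
Hypothesis HT : forall a, T' (Some a) = T a.

Lemma emb_hdn g : hdn T' tr (emb g) = hdn T tr g.
Proof. by case: g => [[x e]|[a p]] //=. Qed.

Lemma emb_tln g : tln K' tr (emb g) = tln K tr g.
Proof. by case: g => [[x e]|[a p]] //=; rewrite last_map HK. Qed.

Lemma emb_chok g : chok K' T' (emb g) = chok K T g.
Proof.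
case: g => [[x e]|[a p]] //=; rewrite path_map; apply: eq_path => x y.
by rewrite /relpre /crel /= HK HT.
Qed.

Lemma emb_maxc g : maxc K' T' tr (emb g) <->
  [/\ maxc K T tr g, K' None != hdn T tr g & T' None != tln K tr g].
Proof.
rewrite /maxc emb_chok emb_hdn emb_tln; split.
  by case=> H1 H2 H3; split => //; split => // c; [rewrite -HK | rewrite -HT].
case=> [[H1 H2 H3] H4 H5]; split => // -[c|] //; by rewrite ?HK ?HT.
Qed.

Lemma unemb (g' : gpath V (option A)) : None \notin arrows g' -> exists g, g' = emb g.
Proof.
case: g' => [xe|[[a|] p]] /=; first by exists (inl xe).
  rewrite in_cons /= => Hp; exists (inr (a, pmap id p)) => /=.
  by rewrite -noNone_map.
  by [].
Qed.
End Emb.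

Lemma first_split (X : eqType) (x : X) l : x \in l ->
  exists l1 l2, l = l1 ++ x :: l2 /\ x \notin l1.
Proof.
elim: l => //= a l IH; rewrite inE; case: (eqVneq x a) => [<- _|Hxa /= Hl].
  by exists [::], l.
have [l1 [l2 [-> H]]] := IH Hl; exists (a :: l1), l2; split => //.
by rewrite inE negb_or Hxa.
Qed.



Lemma last_closed (X : eqType) (P : pred X) (e : rel X) :
  (forall x y, P x -> e x y -> P y) ->
  forall a p x, path e a p -> x \in a :: p -> P x -> P (last a p).
Proof.
move=> Hc a p; elim: p a => [|b p IH] a /= x; first by rewrite inE => _ /eqP ->.
move=> /andP[Hab Hp]; rewrite inE => /orP[/eqP ->|Hx] Px.
  by apply: (IH b b) => //; [rewrite inE eqxx | exact: Hc Px Hab].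
exact: IH Hp Hx Px.
Qed.

Section Main.
Variables (V A : finType) (s t : A -> V) (R : rel A) (sg tau : A -> bool) (al be : A).
Hypothesis Hg : gentle s t R.
Hypothesis Hso : sign_ok s t R sg tau.
Hypothesis Hiso : isolated s t R sg tau al be.

Local Notation s' := (cs s t al).
Local Notation t' := (ct s t be).
Local Notation R' := (cR R al be).
Local Notation sg' := (csg sg tau al).
Local Notation tau' := (ctau sg tau be).
Local Notation rho := (inr (al, [:: be]) : gpath V A).
Local Notation S := (Sn s sg).
Local Notation T := (Sn t tau).
Local Notation KP := (Kp s sg).
Local Notation S' := (Sn s' sg').
Local Notation T' := (Sn t' tau').
Local Notation KP' := (Kp s' sg').
Local Notation NN := (maxc S T id).
Local Notation MM := (maxc KP T flipn).
Local Notation NN' := (maxc S' T' id).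
Local Notation MM' := (maxc KP' T' flipn).

Lemma Hcomp : forall x y, R x y -> s x = t y.
Proof. by case: Hg => [[_ H] _ _ _ _]. Qed.

Lemma Ral : R al be.
Proof. by case/andP: Hiso. Qed.

Lemma rhoN : NN rho.
Proof. by case/andP: Hiso => _ /(maxanti_iff Hso Hcomp). Qed.

Lemma rho_hd c : S c != T al.
Proof. by case: rhoN => _ /(_ c). Qed.

Lemma rho_tl c : T c != S be.
Proof. by case: rhoN => _ _ /(_ c). Qed.

Lemma Sal : S al = T be.
Proof. by apply/eqP; rewrite -(R_ST Hso Hcomp) Ral. Qed.

Lemma neq_pair (p q : (V * bool)%type) : p != q -> p.1 = q.1 -> p.2 = ~~ q.2.
Proof.
case: p q => [x b1] [u c1] /= H E; subst u; move: H.
by rewrite -pair_eqE eqxx /=; case: b1; case: c1.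
Qed.

Lemma Hso' : sign_ok s' t' R' sg' tau'.
Proof.
have [H1 H2 H3] := Hso.
split.
- move=> [a|] [b|] //= Hab E.
  + by apply: H1 E; move: Hab; apply: contra => /eqP ->.
  + exact: (neq_pair (rho_hd a) E).
  + by move: (neq_pair (rho_hd b) (esym E)) => /= ->; rewrite negbK.
- move=> [a|] [b|] //= Hab E.
  + by apply: H2 E; move: Hab; apply: contra => /eqP ->.
  + exact: (neq_pair (rho_tl a) E).
  + by move: (neq_pair (rho_tl b) (esym E)) => /= ->; rewrite negbK.
- move=> [a|] [b|] //= E.
  + exact: H3.
  + case: (eqVneq a be) => [->|Hab]; first by rewrite !eqxx.
    by rewrite (H1 a be Hab E); case: (sg be).
  + case: (eqVneq b al) => [->|Hab]; first by rewrite !eqxx.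
    by rewrite (H2 b al Hab (esym E)); case: (tau al).
  + by move: (neq_pair (rho_tl al) E) => /= ->; case: (sg be).
Qed.

Lemma Hcomp' : forall x y, R' x y -> s' x = t' y.
Proof.
move=> [a|] [b|] //=; first exact: Hcomp.
- by move/eqP => ->.
- by move/eqP => ->.
Qed.

Lemma Sinj' : injective S'. Proof. exact: S_inj Hso'. Qed.
Lemma Tinj' : injective T'. Proof. exact: T_inj Hso'. Qed.

Lemma NN'_emb w : NN' (emb w) <-> NN w /\ w <> rho.
Proof.
have E := emb_maxc (K:=S) (T:=T) (K':=S') (T':=T') id (fun a => erefl) (fun a => erefl) w.
split.
  move/E => [Hw H1 H2]; split => // Ew; subst w; by case/eqP: H1.
case=> Hw Hr; apply/E; split => //.
  apply/negP => /eqP Eh; apply: Hr; apply: (NN_hd_uniq Hso Hw rhoN); by rewrite -Eh.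
apply/negP => /eqP Eh; apply: Hr; apply: (NN_tl_uniq Hso Hw rhoN); by rewrite -Eh.
Qed.

Definition cyc : seq (option A) := [:: None; Some al; Some be].

Lemma cyc_closed x y : x \in cyc -> crel S' T' x y -> y \in cyc.
Proof.
rewrite /cyc !inE => /or3P[] /eqP -> /eqP E.
- have : T' y = T' (Some al) by rewrite -E.
  by move/Tinj' ->; rewrite eqxx orbT.
- have : T' y = T' (Some be) by rewrite -E; exact: Sal.
  by move/Tinj' ->; rewrite eqxx !orbT.
- have : T' y = T' None by rewrite -E.
  by move/Tinj' ->; rewrite eqxx.
Qed.

Lemma cyc_closed_back x y : x \in cyc -> crel S' T' y x -> y \in cyc.
Proof.
rewrite /cyc !inE => /or3P[] /eqP -> /eqP E.
- have : S' y = S' (Some be) by rewrite E.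
  by move/Sinj' ->; rewrite eqxx !orbT.
- have : S' y = S' None by rewrite E.
  by move/Sinj' ->; rewrite eqxx.
- have : S' y = S' (Some al) by rewrite E; exact: (esym Sal).
  by move/Sinj' ->; rewrite eqxx orbT.
Qed.

Lemma cyc_succ x : x \in cyc -> exists c, T' c = S' x.
Proof.
rewrite /cyc !inE => /or3P[] /eqP ->.
- by exists (Some al).
- by exists (Some be); exact: (esym Sal).
- by exists None.
Qed.

Lemma NN'_noNone w' : NN' w' -> None \notin arrows w'.
Proof.
case: w' => [xe|[a p]] //= [Hc _ Htl].
apply/negP => HN.
have Hl := last_closed cyc_closed Hc HN (erefl true : None \in cyc).
have [c Ec] := cyc_succ Hl.
by move: (Htl c); rewrite Ec eqxx.
Qed.

Lemma NN'_iff w' : NN' w' <-> exists w, [/\ NN w, w <> rho & w' = emb w].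
Proof.
split.
  move=> Hw'; have [w Ew] := unemb (NN'_noNone Hw').
  subst w'; have [? ?] := (NN'_emb w).1 Hw'; by exists w.
by case=> w [Hw Hr ->]; apply/NN'_emb.
Qed.

Lemma maxanti'_iff w' : maxanti s' t' R' sg' tau' w' <-> NN' w'.
Proof. exact: (maxanti_iff Hso' Hcomp' w'). Qed.

Lemma al_only w : NN w -> al \in arrows w -> w = rho.
Proof.
case: w => [//|[a p]] Hw /= Hal; have [Hc _ _] := Hw.
case: (chain_pred Hc Hal) => [E|[u _ Eu]].
  subst a; apply: (NN_hd_uniq Hso Hw rhoN) => //.
by move: (rho_hd u); rewrite Eu eqxx.
Qed.

Lemma be_only w : NN w -> be \in arrows w -> w = rho.
Proof.
case: w => [//|[a p]] Hw /= Hbe; have [Hc _ _] := Hw.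
case: (chain_succ Hc Hbe) => [E|[u _ Eu]].
  apply: (NN_tl_uniq Hso Hw rhoN) => /=; by rewrite -E.
by move: (rho_tl u); rewrite Eu eqxx.
Qed.

Lemma C_iff c : Cset s t R sg tau c <-> ~ exists w, NN w /\ c \in arrows w.
Proof.
rewrite /Cset /=; split => H [w [Hw Hc]]; apply: H; exists w; split => //;
  by apply/(maxanti_iff Hso Hcomp).
Qed.

Lemma C'_iff x : Cset s' t' R' sg' tau' x <->
  ~ exists w, [/\ NN w, w <> rho & x \in map Some (arrows w)].
Proof.
rewrite /Cset /=; split => H.
  move=> [w [Hw Hr Hx]]; apply: H; exists (emb w); split.
    by apply/maxanti'_iff/NN'_emb.
  by rewrite arrows_emb.
move=> [w' [/maxanti'_iff /NN'_iff [w [Hw Hr ->]] Hx]]; apply: H; exists w; split => //.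
by rewrite -arrows_emb.
Qed.

Lemma C'_eq : Cset s' t' R' sg' tau' = Some @` (Cset s t R sg tau) `|` [set Some al; Some be; None].
Proof.
apply/seteqP; split => x.
  move/C'_iff => H; case: x H => [c|] H; last by right; right.
  have [->|Hal] := eqVneq c al; first by right; left; left.
  have [->|Hbe] := eqVneq c be; first by right; left; right.
  left; exists c => //; apply/C_iff => -[w [Hw Hc]].
  apply: H; exists w; split => //; last by rewrite mem_map //; exact: Some_inj.
  move=> Ew; subst w; move: Hc; by rewrite !inE (negbTE Hal) (negbTE Hbe).
case=> [[c /C_iff Hc <-]|Hx]; apply/C'_iff => -[w [Hw Hr Hin]].
  by apply: Hc; exists w; split => //; rewrite mem_map in Hin => //; exact: Some_inj.
move: Hx Hin; rewrite /setU /set1 /= => -[[->|->]|->] Hin.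
- by apply: Hr; apply: al_only => //; rewrite mem_map in Hin => //; exact: Some_inj.
- by apply: Hr; apply: be_only => //; rewrite mem_map in Hin => //; exact: Some_inj.
- by move/mapP: Hin => [? _].
Qed.

Lemma Psi_iffg (A0 : finType) (s0 t0 : A0 -> V) (R0 : rel A0) (sg0 tau0 : A0 -> bool) a b :
  Psi_rel s0 t0 R0 sg0 tau0 a b <->
  [/\ Cset s0 t0 R0 sg0 tau0 a, Cset s0 t0 R0 sg0 tau0 b & Sn t0 tau0 b = Sn s0 sg0 a].
Proof.
rewrite /Psi_rel /Sn; split; first by case=> ? ? -> ->.
by case=> ? ? [-> ->].
Qed.

Lemma rho_not_C c : c \in arrows rho -> ~ Cset s t R sg tau c.
Proof. by move=> Hc /C_iff; apply; exists rho; split => //; exact: rhoN. Qed.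

Lemma succ_C u v : Cset s t R sg tau u -> T v = S u -> Cset s t R sg tau v.
Proof.
move=> /C_iff Hu E; apply/C_iff => -[w [Hw Hv]]; case: w Hw Hv => [//|[a p]] Hw Hv.
have [Hc Hh _] := Hw.
case: (chain_pred Hc Hv) => [Ev|[x Hx Ex]].
  by subst v; move: (Hh u); rewrite /= E eqxx.
have Exu : x = u by apply: (S_inj Hso); rewrite Ex E.
by subst x; apply: Hu; exists (inr (a, p)).
Qed.

Lemma pred_C u v : Cset s t R sg tau u -> T u = S v -> Cset s t R sg tau v.
Proof.
move=> /C_iff Hu E; apply/C_iff => -[w [Hw Hv]]; case: w Hw Hv => [//|[a p]] Hw Hv.
have [Hc _ Ht] := Hw.
case: (chain_succ Hc Hv) => [Ev|[x Hx Ex]].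
  by move: (Ht u); rewrite /= -Ev E eqxx.
have Exu : x = u by apply: (T_inj Hso); rewrite -Ex E.
by subst x; apply: Hu; exists (inr (a, p)).
Qed.

Lemma Psi_total u : Cset s t R sg tau u -> exists v, T v = S u.
Proof.
move=> Hu; apply: boolp.contrapT => Hn.
have Hh : forall c, T c != S u.
  by move=> c; apply/eqP => E; apply: Hn; exists c.
have [g [Hg' Eg]] := @maxc_tl_ex V A S T id (T_inj Hso) id (fun x => erefl) _ Hh.
case: g Hg' Eg => [xe|[a p]] Hg' /= Eg.
  by have [_ /(_ u) H _] := Hg'; move: H; rewrite /= Eg eqxx.
have El : last a p = u by apply: (S_inj Hso).
move/C_iff: Hu; apply; exists (inr (a, p)); split => //.
by rewrite /= -El mem_last.
Qed.

Lemma C'_Some c : Cset s t R sg tau c -> Cset s' t' R' sg' tau' (Some c).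
Proof. by move=> Hc; rewrite C'_eq; left; exists c. Qed.

Lemma C'_cyc x : x \in cyc -> Cset s' t' R' sg' tau' x.
Proof.
rewrite C'_eq /cyc !inE => /or3P[] /eqP ->; right; [right|left;left|left;right] => //.
Qed.

Local Notation Psi := (Psi_rel s t R sg tau).
Local Notation Psi' := (Psi_rel s' t' R' sg' tau').
Local Notation C := (Cset s t R sg tau).
Local Notation C' := (Cset s' t' R' sg' tau').

Lemma Psi'_func x y1 y2 : Psi' x y1 -> Psi' x y2 -> y1 = y2.
Proof. by move=> /Psi_iffg [_ _ E1] /Psi_iffg [_ _ E2]; apply: Tinj'; rewrite E1 E2. Qed.
Lemma Psi'_inj x1 x2 y : Psi' x1 y -> Psi' x2 y -> x1 = x2.
Proof. by move=> /Psi_iffg [_ _ E1] /Psi_iffg [_ _ E2]; apply: Sinj'; rewrite -E1 -E2. Qed.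

Lemma C_orbit c : C c -> zorbit Psi' (Some c) = Some @` zorbit Psi c.
Proof.
move=> Hc; apply: (lift_orbit (X := C)) => //.
- by move=> x y /Psi_iffg [].
- move=> u Hu y; split.
    case/Psi_iffg => _ Hy E.
    case: y Hy E => [v|] Hy E.
      exists v; split => //; apply/Psi_iffg; split => //; exact: succ_C Hu E.
    have Eu : u = be by apply: (S_inj Hso); exact: (esym E).
    by subst u; case: (rho_not_C (c := be)) => //; rewrite !inE eqxx orbT.
  case=> v [-> /Psi_iffg [H1 H2 E]]; apply/Psi_iffg; split => //; exact: C'_Some.
- move=> u y Hu /Psi_iffg [Hy _ E].
  case: y Hy E => [v|] Hy E.
    exists v; split => //; apply/Psi_iffg; split => //; exact: pred_C Hu E.
  have Eu : u = al by apply: (T_inj Hso); exact: E.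
  by subst u; case: (rho_not_C (c := al)) => //; rewrite !inE eqxx.
Qed.

Lemma iter_cyc n x y : iter_rel Psi' n x y -> x \in cyc -> y \in cyc.
Proof.
elim: n x => [|n IH] x /=; first by move=> ->.
move=> [z [/Psi_iffg [_ _ E] H]] Hx; apply: IH H _.
by apply: (cyc_closed Hx); rewrite /crel E.
Qed.

Lemma iter_cyc_back n x y : iter_rel Psi' n y x -> x \in cyc -> y \in cyc.
Proof.
elim: n x y => [|n IH] x y /=; first by move=> ->.
move=> [z [/Psi_iffg [_ _ E] H]] Hx.
apply: (cyc_closed_back (IH _ _ H Hx)); by rewrite /crel E.
Qed.

Lemma cyc_orbit : zorbit Psi' None = [set Some al; Some be; None].
Proof.
apply/seteqP; split => y.
  move=> [n [H|H]].
    have := iter_cyc H (erefl true : None \in cyc).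
    by rewrite /cyc !inE => /or3P[] /eqP ->; [right|left;left|left;right].
  have := iter_cyc_back H (erefl true : None \in cyc).
  by rewrite /cyc !inE => /or3P[] /eqP ->; [right|left;left|left;right].
rewrite /setU /set1 /= => -[[->|->]|->].
- exists 1; left; exists (Some al); split => //; apply/Psi_iffg; split.
  + by apply: C'_cyc.
  + by apply: C'_cyc; rewrite !inE eqxx orbT.
  + by [].
- exists 1; right; exists None; split => //; apply/Psi_iffg; split.
  + by apply: C'_cyc; rewrite !inE eqxx !orbT.
  + by apply: C'_cyc.
  + by [].
- exact: zorbit_refl.
Qed.

Lemma C_orbits_eq : orbits Psi' C' =
  [set (image O Some) | O in orbits Psi C] `|` [set [set Some al; Some be; None]].
Proof.
apply/seteqP; split => O'.
  move=> [x [Hx ->]].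
  move: Hx; rewrite C'_eq => -[[c Hc <-]|Hx].
    by left; exists (zorbit Psi c); [exists c | rewrite C_orbit].
  right; rewrite /set1 /= -cyc_orbit.
  apply: (zorbit_eq Psi'_func Psi'_inj).
  move: Hx; rewrite /setU /set1 /= => -[[->|->]|->].
  - by exists 1; left; exists (Some al); split => //; apply/Psi_iffg; split => //;
      apply: C'_cyc; rewrite !inE eqxx ?orbT.
  - by exists 1; right; exists None; split => //; apply/Psi_iffg; split => //;
      apply: C'_cyc; rewrite !inE eqxx ?orbT.
  - exact: zorbit_refl.
case=> [[O [c [Hc EO]] <-]|]; first subst O.
  by exists (Some c); split; [exact: C'_Some | rewrite C_orbit].
rewrite /set1 /= => ->; exists None; split; [exact: C'_cyc | by rewrite cyc_orbit].
Qed.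

Local Notation Phi := (Phi_rel s t R sg tau).
Local Notation Phi' := (Phi_rel s' t' R' sg' tau').

Lemma ehdn tr g : hdn T' tr (emb g) = hdn T tr g.
Proof. by case: g => [[x e]|[a p]]. Qed.
Lemma etlnS g : tln S' id (emb g) = tln S id g.
Proof. by case: g => [[x e]|[a p]] //=; rewrite last_map. Qed.
Lemma etlnK g : tln KP' flipn (emb g) = tln KP flipn g.
Proof. by case: g => [[x e]|[a p]] //=; rewrite last_map. Qed.
Lemma emaxcM g : MM' (emb g) <-> [/\ MM g, KP' None != hdn T flipn g & T' None != tln KP flipn g].
Proof. exact: (emb_maxc (K:=KP) (T:=T) (K':=KP') (T':=T') flipn (fun a => erefl) (fun a => erefl) g). Qed.
Lemma echokM g : chok KP' T' (emb g) = chok KP T g.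
Proof. exact: (emb_chok (K:=KP) (T:=T) (K':=KP') (T':=T') (fun a => erefl) (fun a => erefl) g). Qed.

Lemma N_eq : Nset s' t' R' sg' tau' = emb @` (Nset s t R sg tau `\ rho).
Proof.
apply/seteqP; split => x.
  rewrite /Nset /= => /maxanti'_iff /NN'_iff [w [Hw Hr ->]].
  by exists w => //; split => //; apply/(maxanti_iff Hso Hcomp).
move=> [w [Hw Hr] <-]; rewrite /Nset /=; apply/maxanti'_iff/NN'_emb; split => //.
exact/(maxanti_iff Hso Hcomp).
Qed.

Lemma Phi'_b1 u v : NN u -> u <> rho -> Phi u v -> v <> rho -> Phi' (emb u) (emb v).
Proof.
move=> Hu ur [o [/(psi_iff Hso Hcomp) [_ Ho Eo] /(phi_iff Hso Hcomp) [_ Hv Ev]]] vr.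
have Ho' : MM' (emb o).
  apply/emaxcM; split => //.
    apply/eqP => E; apply: vr; apply: (NN_hd_uniq Hso Hv rhoN).
    by rewrite Ev -E /Kp flipnK.
  apply/eqP => E; apply: ur; apply: (NN_tl_uniq Hso Hu rhoN).
  by rewrite -Eo -E.
exists (emb o); split.
  apply/(psi_iff Hso' Hcomp'); split => //; first by apply/NN'_emb.
  by rewrite etlnK etlnS.
apply/(phi_iff Hso' Hcomp'); split => //; first by apply/NN'_emb.
by rewrite !ehdn.
Qed.

Definition gam : gpath V (option A) := inr (None, [::]).

Lemma Phi'_b2 u r2 : NN u -> u <> rho -> Phi u rho -> Phi rho r2 -> r2 <> rho ->
  Phi' (emb u) (emb r2).
Proof.
move=> Hu ur [o [/(psi_iff Hso Hcomp) [_ Ho Eo] /(phi_iff Hso Hcomp) [_ _ Ev]]].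
move=> [o0 [/(psi_iff Hso Hcomp) [_ Ho0 Eo0] /(phi_iff Hso Hcomp) [_ Hr2 Ev0]]] r2r.
have [Hc0 Hh0 Ht0] := Ho0; have [Hc Hh Ht] := Ho.
have J1 : tln KP' flipn (emb o0) = hdn T' flipn gam by rewrite etlnK Eo0.
have [C1 H1 T1 _] := @gcat_prop V (option A) KP' T' flipn (emb o0) gam (etrans (echokM o0) Hc0) (erefl true) J1.
have J2 : tln KP' flipn (gcat (emb o0) gam) = hdn T' flipn (emb o).
  rewrite T1 ehdn; apply: flipn_inj; rewrite -Ev flipnK //.
have [C2 H2 T2 _] := @gcat_prop V (option A) KP' T' flipn _ (emb o) C1 (etrans (echokM o) Hc) J2.
set mu := gcat (gcat (emb o0) gam) (emb o) in C2 H2 T2 *.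
have Hmu : MM' mu.
  split => //.
    rewrite H2 H1 ehdn => -[c|].
      exact: Hh0.
    apply/eqP => E; apply: r2r; apply: (NN_hd_uniq Hso Hr2 rhoN).
    by rewrite Ev0 -E /Kp flipnK.
  rewrite T2 etlnK => -[c|]; first exact: Ht.
  apply/eqP => E; apply: ur; apply: (NN_tl_uniq Hso Hu rhoN).
  by rewrite -Eo -E.
exists mu; split.
  apply/(psi_iff Hso' Hcomp'); split => //; first by apply/NN'_emb.
  by rewrite T2 etlnK etlnS.
apply/(phi_iff Hso' Hcomp'); split => //.
  by apply/NN'_emb; split.
by rewrite ehdn H2 H1 ehdn.
Qed.

Lemma Phi'_char r2 : Phi rho r2 -> r2 <> rho -> forall u, NN u -> u <> rho ->
  forall y, Phi' (emb u) y <-> exists v, y = emb v /\ Gsk Phi rho r2 u v.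
Proof.
move=> Hr2 r2r u Hu ur y; split.
  move=> Hy; have [v Hv] := Phi_total Hso Hcomp Hu.
  have [vr|vr] := boolp.pselect (v = rho).
    subst v; have H' := Phi'_b2 Hu ur Hv Hr2 r2r.
    rewrite (Phi_func Hso' Hcomp' Hy H'); exists r2; split => //; by right.
  have H' := Phi'_b1 Hu ur Hv vr.
  rewrite (Phi_func Hso' Hcomp' Hy H'); exists v; split => //; by left.
move=> [v [-> [[Hv vr]|[Hv ->]]]]; [exact: Phi'_b1 | exact: Phi'_b2].
Qed.

Lemma iter_self (X : Type) (F : X -> X -> Prop) x n : F x x -> iter_rel F n x x.
Proof. by move=> H; elim: n => //= n IH; exists x. Qed.

Lemma orb_single : zorbit Phi rho = [set rho] <-> Phi rho rho.
Proof.
split.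
  move=> E; have [r2 Hr2] := Phi_total Hso Hcomp rhoN.
  have : zorbit Phi rho r2 by exists 1; left; exists r2.
  by rewrite E /set1 /= => Er; rewrite -{2}Er.
move=> Hrr; apply/seteqP; split => y.
  move=> [n [H|H]]; rewrite /set1 /=.
    exact: (iter_func (Phi_func Hso Hcomp) H (iter_self n Hrr)).
  exact: (iter_inj (Phi_inj Hso Hcomp) H (iter_self n Hrr)).
by rewrite /set1 /= => ->; exact: zorbit_refl.
Qed.

Lemma iter_NN n x y : iter_rel Phi n x y -> NN x -> NN y.
Proof.
elim: n x => [|n IH] x /=; first by move=> ->.
by move=> [z [Fxz H]] _; apply: IH H (Phi_dom Hso Hcomp Fxz).2.
Qed.

Lemma zorbit_NN x y : zorbit Phi x y -> NN x -> NN y.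
Proof.
move=> [n [H|H]] Hx; first exact: iter_NN H Hx.
by case: n H => [|n] /= H; [rewrite H | case: H => z [Fyz _]; exact: (Phi_dom Hso Hcomp Fyz).1].
Qed.

Lemma N_orbits : zorbit Phi rho <> [set rho] ->
  orbits Phi' (Nset s' t' R' sg' tau') =
  [set (image O emb) | O in [set O | orbits Phi (Nset s t R sg tau) O /\ O <> zorbit Phi rho]]
  `|` [set emb @` (zorbit Phi rho `\ rho)].
Proof.
move=> hyp.
have [r2 Hr2] := Phi_total Hso Hcomp rhoN.
have r2r : r2 <> rho.
  by move=> E; subst r2; apply: hyp; apply/orb_single.
have SK : forall x, NN x -> x <> rho -> zorbit Phi' (emb x) = emb @` (zorbit Phi x `\ rho).
  move=> x Hx xr.
  apply: (@skip_orbit _ _ emb Phi Phi' (fun w => NN w) rho r2) => //.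
  - exact: emb_inj.
  - exact: Phi_func Hso Hcomp.
  - exact: Phi_dom Hso Hcomp.
  - exact: Phi'_char.
  - move=> y y' /(Phi_dom Hso' Hcomp') [/NN'_iff [u [Hu ur ->]] _]; by exists u.
have Fun := Phi_func Hso Hcomp; have Inj := Phi_inj Hso Hcomp.
have notin : forall x, zorbit Phi x <> zorbit Phi rho -> zorbit Phi x `\ rho = zorbit Phi x.
  move=> x Hne; apply/seteqP; split => y; first by case.
  move=> Hy; split => //; rewrite /set1 /= => Eyr; subst y; apply: Hne.
  exact: (esym (zorbit_eq Fun Inj Hy)).
apply/seteqP; split => O'.
  move=> [x' [/maxanti'_iff /NN'_iff [x [Hx xr ->]] ->]]; rewrite (SK x Hx xr).
  have [Eo|Eo] := boolp.pselect (zorbit Phi x = zorbit Phi rho).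
    by right; rewrite /set1 /= Eo.
  left; exists (zorbit Phi x); last by rewrite notin.
  split => //; exists x; split => //; exact/(maxanti_iff Hso Hcomp).
case=> [[O [[x [/(maxanti_iff Hso Hcomp) Hx ->]] Hne] <-]|].
  have xr : x <> rho by move=> E; subst x.
  exists (emb x); split; first by apply/maxanti'_iff/NN'_emb.
  by rewrite (SK x Hx xr) notin.
rewrite /set1 /= => ->.
have [y [Hy yr]] : exists y, zorbit Phi rho y /\ y <> rho.
  apply: boolp.contrapT => Hn; apply: hyp; apply/seteqP; split => y.
    move=> Hy; apply: boolp.contrapT => Hyr; apply: Hn; by exists y.
  by rewrite /set1 /= => ->; exact: zorbit_refl.
have Ny := zorbit_NN Hy rhoN.
exists (emb y); split; first by apply/maxanti'_iff/NN'_emb.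
by rewrite (SK y Ny yr) (zorbit_eq Fun Inj Hy).
Qed.

Lemma perm_path (V0 A0 : finType) (s0 t0 : A0 -> V0) (R0 : rel A0) (a : A0) p :
  permitted s0 t0 R0 (inr (a, p)) = is_path s0 t0 (a :: p) && ~~ has_rel R0 (a :: p).
Proof. by []. Qed.

Lemma not_gentle' : Phi rho rho -> ~ gentle s' t' R'.
Proof.
move=> [o [/(psi_iff Hso Hcomp) [_ Ho Eo] /(phi_iff Hso Hcomp) [_ _ Ev]]] Hg'.
have [Hc _ _] := Ho.
have J : tln KP' flipn gam = hdn T' flipn (emb o).
  rewrite ehdn; apply: flipn_inj; rewrite -Ev flipnK //.
have [CG HG TG AG] := @gcat_prop V (option A) KP' T' flipn gam (emb o) (erefl true) (etrans (echokM o) Hc) J.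
set G := gcat gam (emb o) in CG HG TG AG.
have TG' : tln KP' flipn G = S be by rewrite TG etlnK Eo.
have HG' : hdn T' flipn G = S be by rewrite HG.
pose fix rep k := if k is k'.+1 then gcat (rep k') G else G.
have Hrep : forall k, [/\ chok KP' T' (rep k), hdn T' flipn (rep k) = S be,
    tln KP' flipn (rep k) = S be & k < size (arrows (rep k))].
  elim=> [|k [C1 H1 T1 S1]] /=; first by split => //; rewrite AG.
  have J' : tln KP' flipn (rep k) = hdn T' flipn G by rewrite T1 HG'.
  have [C2 H2 T2 A2] := @gcat_prop V (option A) KP' T' flipn (rep k) G C1 CG J'.
  split => //; [by rewrite H2 | by rewrite T2 | ].
  by rewrite A2 size_cat AG /=; rewrite addnS ltnS; apply: leq_trans S1 (leq_addr _ _).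
case: Hg' => _ _ _ _ [n [n0 Hn]]; case: n n0 Hn => [//|n] _ Hn.
have [C1 _ _ S1] := Hrep n.+1.
case E: (rep n.+1) C1 S1 => [xe|[a q]] //= C1 S1.
have Hq : n <= size q by rewrite ltnS in S1; exact: ltnW.
have := Hn (a :: take n q).
rewrite /= size_take_min (minn_idPl Hq) => /(_ erefl).
have : permitted s' t' R' (inr (a, take n q)).
  by rewrite (permitted_chok Hso' Hcomp') /=; apply: take_path.
by rewrite perm_path => /andP[-> /negP H] /(_ erefl).
Qed.

Lemma sorted_catl (X : Type) (e : rel X) l1 l2 : sorted e (l1 ++ l2) -> sorted e l1.
Proof. by case: l1 => //= a l1; rewrite cat_path => /andP[]. Qed.

Lemma sorted_map_Some l : sorted (crel KP' T') (map Some l) = sorted (crel KP T) l.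
Proof. by case: l => //= a l; rewrite path_map. Qed.

Lemma pathc (X : Type) (e : rel X) x y p : path e x (y :: p) = e x y && path e y p.
Proof. by []. Qed.

Lemma L1 u : path (crel KP' T') None (rcons (map Some u) None) -> Phi rho rho.
Proof.
move=> Hp.
have [o [Ho Hh Ht]] : exists o, [/\ chok KP T o, hdn T flipn o = flipn (T al) & tln KP flipn o = S be].
  case: u Hp => [|b u] Hp.
    have /andP[/eqP E _] := Hp.
    by exists (inl (t al, tau al)).
  move: Hp; rewrite map_cons rcons_cons pathc => /andP[/eqP E1].
  rewrite rcons_path => /andP[H1 /eqP E2].
  exists (inr (b, u)); split.
  - by move: H1; rewrite path_map.
  - exact: (esym E1).
  - by move: E2; rewrite last_map.
have Mo : MM o.
  split => // c; rewrite ?Hh ?Ht.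
    by apply/eqP => /flipn_inj E; move: (rho_hd c); rewrite E eqxx.
  exact: rho_tl.
exists o; split.
  by apply/(psi_iff Hso Hcomp); split => //; exact: rhoN.
apply/(phi_iff Hso Hcomp); split => //; first exact: rhoN.
by rewrite Hh flipnK.
Qed.

Lemma gentle'_of : ~ Phi rho rho -> gentle s' t' R'.
Proof.
move=> Hnr.
have [[Hconn _] _ _ _ [n0 [n0p Hn0]]] := Hg.
have L2 : forall l, sorted (crel KP T) l -> size l < n0.
  move=> [|a q] //= Hq; rewrite ltnNge; apply/negP => Hs.
  have Hq' : n0.-1 <= size q by rewrite -ltnS prednK.
  have := Hn0 (a :: take n0.-1 q).
  rewrite /= size_take_min (minn_idPl Hq') prednK // => /(_ erefl).
  have : permitted s t R (inr (a, take n0.-1 q)).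
    by rewrite (permitted_chok Hso Hcomp) /=; apply: take_path.
  by rewrite perm_path => /andP[-> /negP H] /(_ erefl).
have L2' : forall l, None \notin l -> sorted (crel KP' T') l -> size l < n0.
  move=> l /noNone_map El; rewrite El sorted_map_Some size_map; exact: L2.
have Main : forall l, sorted (crel KP' T') l -> size l < (n0 + n0).+1.
  move=> l Hl; have [HN|HN] := boolP (None \in l); last first.
    by apply: leq_trans (L2' l HN Hl) _; rewrite leqW // leq_addr.
  have [l1 [l2 [El N1]]] := first_split HN; subst l.
  move: Hl; rewrite sorted_cat_cons => /andP[Hl1 Hl2].
  have Hl1' : sorted (crel KP' T') (l1 ++ [:: None]) by rewrite cats1.
  have S1 := L2' l1 N1 (sorted_catl Hl1').
  have [HN2|HN2] := boolP (None \in l2); last first.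
    have S2 := L2' l2 HN2 (path_sorted Hl2).
    by rewrite size_cat /= addnS ltnS -addSn leq_add // ltnW.
  have [u [l3 [El2 Nu]]] := first_split HN2; subst l2.
  exfalso; apply: Hnr; apply: (L1 (u := pmap id u)).
  rewrite -noNone_map //.
  by move: Hl2; rewrite cat_path -cats1 cat_path /= => /andP[-> /andP[-> _]].
apply: gentle_of Hso' Hcomp' _ _.
  move=> x y; apply: (connect_sub _ (Hconn x y)) => u v /existsP [e He].
  by apply: connect1; apply/existsP; exists (Some e).
exists (n0 + n0).+1; split => // p Hs Hp; apply/negPn/negP => Hr.
case: p Hs Hp Hr => [//|a q] Hs Hp Hr.
have : permitted s' t' R' (inr (a, q)) by rewrite perm_path Hp Hr.
rewrite (permitted_chok Hso' Hcomp') /= => Hq.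
by move: (Main (a :: q) Hq); rewrite Hs ltnn.
Qed.

Lemma gentle'_iff : gentle s' t' R' <-> zorbit Phi rho <> [set rho].
Proof.
split.
  by move=> Hg' /orb_single Hrr; exact: (not_gentle' Hrr Hg').
by move=> H; apply: gentle'_of => /orb_single.
Qed.
End Main.

Theorem lemma4p1 (V A : finType) (s t : A -> V) (R : rel A)
    (sg tau : A -> bool) (al be : A) :
  gentle s t R -> sign_ok s t R sg tau -> isolated s t R sg tau al be ->
  let rho : gpath V A := inr (al, [:: be]) in
  let s' := cs s t al in let t' := ct s t be in let R' := cR R al be in
  let sg' := csg sg tau al in let tau' := ctau sg tau be in
  let orb := zorbit (Phi_rel s t R sg tau) rho in
  (gentle s' t' R' <-> orb <> [set rho]) /\
  (orb <> [set rho] ->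
     [/\ Nset s' t' R' sg' tau' = emb @` (Nset s t R sg tau `\ rho),
         orbits (Phi_rel s' t' R' sg' tau') (Nset s' t' R' sg' tau') =
           [set (image O emb) | O in
              [set O | orbits (Phi_rel s t R sg tau) (Nset s t R sg tau) O /\ O <> orb]]
           `|` [set emb @` (orb `\ rho)],
         Cset s' t' R' sg' tau' = Some @` (Cset s t R sg tau) `|` [set Some al; Some be; None]
       & orbits (Psi_rel s' t' R' sg' tau') (Cset s' t' R' sg' tau') =
           [set (image O Some) | O in orbits (Psi_rel s t R sg tau) (Cset s t R sg tau)]
           `|` [set [set Some al; Some be; None]]]).
Proof.
move=> Hg Hso Hiso; cbv zeta.
split; first exact: (gentle'_iff Hg Hso Hiso).
move=> H; split.
- exact: (N_eq Hg Hso Hiso).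
- exact: (N_orbits Hg Hso Hiso H).
- exact: (C'_eq Hg Hso Hiso).
- exact: (C_orbits_eq Hg Hso Hiso).
Qed.
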